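(* Let $1<a_1<a_2$ be coprime integers, $S=\langle a_1,a_2\rangle$, and let $t\in(1,\infty)$. If $r_0(t)$ is irrational, then $\Delta_t(S)$ is dense in $[0,|a_1a_2P(t)|]$, i.e. $[0,|a_1a_2P(t)|]$ is contained in the closure of $\Delta_t(S)$.
   Context: $S=\{\lambda_1a_1+\lambda_2a_2:\lambda_1,\lambda_2\in\mathbb{N}_0\}$. For $t\in[1,\infty)$ and $(u,v)\in\mathbb{R}^2$, $\|(u,v)\|_t=(|u|^t+|v|^t)^{1/t}$. For $x\in S$, $Z(x)=\{(m,n)\in\mathbb{N}_0^2: ma_1+na_2=x\}$, $\mathscr{L}_t(x)=\{\|f\|_t: f\in Z(x)\}$, $\Delta_t(x)$ is the set of differences between consecutive elements of $\mathscr{L}_t(x)$ (in increasing order), and $\Delta_t(S)=\bigcup_{x\in S}\Delta_t(x)$. Define $\mu_t(r)=\left\|\left(\frac{1-r}{a_1},\frac{r}{a_2}\right)\right\|_t$ for $r\in[0,1]$, $r_0(t)=\min\{r\in[0,1]:\mu_t(r)=\frac{1}{a_2}\}$, and $P(t)=\mu_t'(r_0(t))$ (derivative in $r$). *)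

(* Defs.v *)
From Stdlib Require Import Reals Lra Lia Arith.
From Coquelicot Require Import Coquelicot.
Open Scope R_scope.

(* |x|^t for real t >= 1, with the convention 0^t = 0 (Stdlib's Rpower 0 t = 1). *)
Definition rpow (x t : R) : R :=
  if Req_EM_T x 0 then 0 else Rpower (Rabs x) t.

Definition tnorm (t u v : R) : R :=
  rpow (rpow u t + rpow v t) (1 / t).

Definition in_S (a1 a2 x : nat) : Prop :=
  exists m n : nat, (m * a1 + n * a2)%nat = x.

Definition in_Z (a1 a2 x m n : nat) : Prop := (m * a1 + n * a2)%nat = x.

Definition in_L (a1 a2 : nat) (t : R) (x : nat) (l : R) : Prop :=
  exists m n : nat, in_Z a1 a2 x m n /\ l = tnorm t (INR m) (INR n).

Definition in_Delta (a1 a2 : nat) (t : R) (x : nat) (d : R) : Prop :=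
  exists l1 l2 : R,
    in_L a1 a2 t x l1 /\ in_L a1 a2 t x l2 /\ l1 < l2 /\
    (forall l, in_L a1 a2 t x l -> ~ (l1 < l /\ l < l2)) /\
    d = l2 - l1.

Definition in_DeltaS (a1 a2 : nat) (t : R) (d : R) : Prop :=
  exists x : nat, in_S a1 a2 x /\ in_Delta a1 a2 t x d.

Definition mu (a1 a2 : nat) (t r : R) : R :=
  tnorm t ((1 - r) / INR a1) (r / INR a2).

Definition is_r0 (a1 a2 : nat) (t r0 : R) : Prop :=
  0 <= r0 <= 1 /\ mu a1 a2 t r0 = 1 / INR a2 /\
  (forall r, 0 <= r <= 1 -> mu a1 a2 t r = 1 / INR a2 -> r0 <= r).

Definition irrational (x : R) : Prop :=
  ~ (exists p q : Z, q <> 0%Z /\ x = IZR p / IZR q).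

(* Main.v *)
Require Import Defs.
From Stdlib Require Import Reals Lra Lia Arith ZArith.
From Coquelicot Require Import Coquelicot.
Open Scope R_scope.

Lemma rpow_pos x p : 0 < x -> rpow x p = Rpower x p.
Proof.
  intros Hx. unfold rpow. destruct (Req_EM_T x 0); [lra|].
  rewrite Rabs_pos_eq; lra.
Qed.

Lemma rpow_0 p : rpow 0 p = 0.
Proof. unfold rpow. destruct (Req_EM_T 0 0); lra. Qed.

Lemma Rpower_pos x p : 0 < Rpower x p.
Proof. unfold Rpower. apply exp_pos. Qed.

Lemma rpow_ge0 x p : 0 <= rpow x p.
Proof. unfold rpow. destruct (Req_EM_T x 0); [lra|]. left; apply Rpower_pos. Qed.

Lemma rpow_lt p x y : 0 < p -> 0 <= x < y -> rpow x p < rpow y p.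
Proof.
  intros Hp [Hx Hxy]. rewrite (rpow_pos y) by lra.
  destruct Hx as [Hx|Hx].
  - rewrite rpow_pos by lra. apply Rlt_Rpower_l; lra.
  - subst. rewrite rpow_0. apply Rpower_pos.
Qed.

Lemma rpow_le p x y : 0 < p -> 0 <= x <= y -> rpow x p <= rpow y p.
Proof.
  intros Hp [Hx Hxy]. destruct Hxy as [H|H].
  - left; apply rpow_lt; lra.
  - subst; lra.
Qed.

Lemma rpow_inv p x : 0 < p -> 0 <= x -> rpow (rpow x p) (1/p) = x.
Proof.
  intros Hp [Hx|Hx].
  - rewrite (rpow_pos x) by lra. rewrite rpow_pos by apply Rpower_pos.
    rewrite Rpower_mult. replace (p * (1/p)) with 1 by (field; lra).
    apply Rpower_1; lra.
  - subst. rewrite !rpow_0. reflexivity.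
Qed.

Lemma rpow_mul c x p : 0 < c -> 0 <= x -> rpow (c * x) p = Rpower c p * rpow x p.
Proof.
  intros Hc [Hx|Hx].
  - rewrite !rpow_pos by nra. rewrite Rpower_mult_distr; auto.
  - subst. rewrite Rmult_0_r, !rpow_0. ring.
Qed.

Lemma tnorm_hom t c u v : 0 < t -> 0 < c -> 0 <= u -> 0 <= v ->
  tnorm t (c * u) (c * v) = c * tnorm t u v.
Proof.
  intros Ht Hc Hu Hv. unfold tnorm.
  rewrite !rpow_mul by auto.
  replace (Rpower c t * rpow u t + Rpower c t * rpow v t)
    with (Rpower c t * (rpow u t + rpow v t)) by ring.
  rewrite rpow_mul.
  - rewrite Rpower_mult. replace (t * (1/t)) with 1 by (field; lra).
    rewrite Rpower_1; auto.
  - apply Rpower_pos.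
  - pose proof (rpow_ge0 u t); pose proof (rpow_ge0 v t); lra.
Qed.

Lemma rpow_small p y : 1 <= p -> Rabs y <= 1 -> rpow y p <= Rabs y.
Proof.
  intros Hp Hy. unfold rpow. destruct (Req_EM_T y 0).
  - apply Rabs_pos.
  - assert (Hy0 : 0 < Rabs y) by (apply Rabs_pos_lt; auto).
    unfold Rpower. rewrite <- (exp_ln (Rabs y)) at 2 by auto.
    assert (ln (Rabs y) <= 0) by (rewrite <- ln_1; apply ln_le; lra).
    assert (p * ln (Rabs y) <= ln (Rabs y)) by nra.
    destruct H0 as [H0|H0]; [left; apply exp_increasing; auto| rewrite H0; lra].
Qed.

Lemma rpow_deriv p x : 0 < x ->
  derivable_pt_lim (fun y => rpow y p) x (p * Rpower x (p - 1)).
Proof.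
  intros Hx. apply is_derive_Reals.
  apply is_derive_ext_loc with (f := fun y => Rpower y p).
  - apply locally_open with (D := fun y => 0 < y).
    + apply open_gt.
    + intros y Hy. symmetry. apply rpow_pos; auto.
    + auto.
  - apply is_derive_Reals. apply derivable_pt_lim_power; auto.
Qed.

Lemma rpow_cont p x : 1 <= p -> 0 <= x -> continuity_pt (fun y => rpow y p) x.
Proof.
  intros Hp [Hx|Hx].
  - apply derivable_continuous_pt. eexists. apply rpow_deriv; auto.
  - subst. intros eps Heps. exists (Rmin 1 eps). split.
    + apply Rmin_pos; lra.
    + intros y [_ Hy]. unfold dist in *; simpl in *; unfold R_dist in *.
      rewrite rpow_0. rewrite Rminus_0_r in *. 
      rewrite Rabs_pos_eq by apply rpow_ge0.
      assert (Rabs y <= 1) by (pose proof (Rmin_l 1 eps); lra).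
      pose proof (rpow_small p y Hp H). pose proof (Rmin_r 1 eps). lra.
Qed.

Lemma mvt_open f df a b : a < b ->
  (forall x, a < x < b -> derivable_pt_lim f x (df x)) ->
  (forall x, a <= x <= b -> continuity_pt f x) ->
  exists c, a < c < b /\ f b - f a = df c * (b - a).
Proof.
  intros Hab Hd Hc.
  assert (pr1 : forall c, a < c < b -> derivable_pt f c).
  { intros c Hc'. exists (df c). apply Hd; auto. }
  assert (pr2 : forall c, a < c < b -> derivable_pt id c).
  { intros c _. apply derivable_pt_id. }
  destruct (MVT f id a b pr1 pr2 Hab Hc) as [c [P Hm]].
  - intros; apply derivable_continuous_pt, derivable_pt_id.
  - exists c. split; auto.
    rewrite (derive_pt_eq_0 f c (df c) (pr1 c P) (Hd c P)) in Hm.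
    rewrite (derive_pt_eq_0 id c 1 (pr2 c P) (derivable_pt_lim_id c)) in Hm.
    unfold id in Hm. lra.
Qed.

Section Shape.
Variables (h dh : R -> R) (r0 : R).
Hypothesis Hr0 : 0 < r0 < 1.
Hypothesis Hd : forall x, 0 < x < 1 -> derivable_pt_lim h x (dh x).
Hypothesis Hc : forall x, 0 <= x <= 1 -> continuity_pt h x.
Hypothesis Hinc : forall x y, 0 < x < y -> y < 1 -> dh x < dh y.
Hypothesis Heq : h r0 = h 1.

Let mvt a b : 0 <= a < b -> b <= 1 -> exists c, a < c < b /\ h b - h a = dh c * (b - a).
Proof.
  intros. apply mvt_open; [lra| |].
  - intros; apply Hd; lra.
  - intros; apply Hc; lra.
Qed.

Lemma shape_S1 r : r0 <= r <= 1 -> h r <= h r0.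
Proof.
  intros Hr.
  destruct (Req_dec r r0) as [->|Hne]; [lra|].
  destruct (Req_dec r 1) as [->|Hne1]; [lra|].
  destruct (mvt r0 r) as [x1 [Hx1 E1]]; try lra.
  destruct (mvt r 1) as [x2 [Hx2 E2]]; try lra.
  assert (dh x1 < dh x2) by (apply Hinc; lra).
  destruct (Rle_lt_dec (h r) (h r0)) as [|Hgt]; auto.
  exfalso.
  assert (dh x1 > 0).
  { destruct (Rle_lt_dec (dh x1) 0); auto. assert (dh x1 * (r - r0) <= 0) by nra. lra. }
  assert (dh x2 < 0).
  { destruct (Rle_lt_dec 0 (dh x2)); auto. assert (dh x2 * (1 - r) >= 0) by nra. lra. }
  lra.
Qed.

Lemma shape_S2 x y : 0 <= x < y -> y <= r0 -> h y < h x.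
Proof.
  intros Hxy Hy.
  destruct (mvt r0 1) as [c [Hcc Ec]]; try lra.
  assert (dh c = 0).
  { rewrite Heq in Ec. assert (dh c * (1 - r0) = 0) by lra.
    apply Rmult_integral in H as [H|H]; lra. }
  destruct (mvt x y) as [z [Hz Ez]]; try lra.
  assert (dh z < dh c) by (apply Hinc; lra).
  assert (dh z * (y - x) < 0) by (apply Rmult_neg_pos; lra). 
  lra.
Qed.
End Shape.

Definition hh (A B t r : R) := rpow ((1-r)/A) t + rpow (r/B) t.
Definition dhh (A B t r : R) :=
  -(t/A) * rpow ((1-r)/A) (t-1) + (t/B) * rpow (r/B) (t-1).

Lemma mu_hh a1 a2 t r : mu a1 a2 t r = rpow (hh (INR a1) (INR a2) t r) (1/t).
Proof. reflexivity. Qed.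

Lemma hh_deriv A B t r : 0 < A -> 0 < B -> 0 < r < 1 ->
  derivable_pt_lim (hh A B t) r (dhh A B t r).
Proof.
  intros HA HB Hr. apply is_derive_Reals.
  assert (H1 : is_derive (fun r => rpow ((1-r)/A) t) r
                 (scal (-(1/A)) (t * Rpower ((1-r)/A) (t-1)))).
  { apply (is_derive_comp (fun y => rpow y t) (fun r => (1-r)/A)).
    - apply is_derive_Reals. apply rpow_deriv. apply Rdiv_lt_0_compat; lra.
    - auto_derive; [lra| field; lra]. }
  assert (H2 : is_derive (fun r => rpow (r/B) t) r
                 (scal (1/B) (t * Rpower (r/B) (t-1)))).
  { apply (is_derive_comp (fun y => rpow y t) (fun r => r/B)).
    - apply is_derive_Reals. apply rpow_deriv. apply Rdiv_lt_0_compat; lra.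
    - auto_derive; [lra| field; lra]. }
  pose proof (is_derive_plus _ _ _ _ _ H1 H2) as H3.
  unfold hh, dhh.
  rewrite (rpow_pos ((1-r)/A)) by (apply Rdiv_lt_0_compat; lra).
  rewrite (rpow_pos (r/B)) by (apply Rdiv_lt_0_compat; lra).
  replace (-(t/A) * Rpower ((1-r)/A) (t-1) + t/B * Rpower (r/B) (t-1))
    with (plus (scal (-(1/A)) (t * Rpower ((1-r)/A) (t-1))) (scal (1/B) (t * Rpower (r/B) (t-1)))).
  - exact H3.
  - unfold plus, scal; simpl. unfold mult; simpl. field. lra.
Qed.

Lemma hh_cont A B t r : 0 < A -> 0 < B -> 1 <= t -> 0 <= r <= 1 ->
  continuity_pt (hh A B t) r.
Proof.
  intros HA HB Ht Hr. unfold hh.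
  apply (continuity_pt_plus (fun r => rpow ((1-r)/A) t) (fun r => rpow (r/B) t)).
  - apply (continuity_pt_comp (fun r => (1-r)/A) (fun y => rpow y t)).
    + reg; lra.
    + apply rpow_cont; auto. apply Rdiv_le_0_compat; lra.
  - apply (continuity_pt_comp (fun r => r/B) (fun y => rpow y t)).
    + reg; lra.
    + apply rpow_cont; auto. apply Rdiv_le_0_compat; lra.
Qed.

Lemma dhh_inc A B t x y : 0 < A -> 0 < B -> 1 < t -> 0 <= x < y -> y <= 1 ->
  dhh A B t x < dhh A B t y.
Proof.
  intros HA HB Ht Hxy Hy. unfold dhh.
  assert (rpow ((1-y)/A) (t-1) < rpow ((1-x)/A) (t-1)).
  { apply rpow_lt; [lra|]. split.
    - apply Rdiv_le_0_compat; lra.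
    - unfold Rdiv; apply Rmult_lt_compat_r; [apply Rinv_0_lt_compat|]; lra. }
  assert (rpow (x/B) (t-1) < rpow (y/B) (t-1)).
  { apply rpow_lt; [lra|]. split.
    - apply Rdiv_le_0_compat; lra.
    - unfold Rdiv; apply Rmult_lt_compat_r; [apply Rinv_0_lt_compat|]; lra. }
  assert (0 < t/A) by (apply Rdiv_lt_0_compat; lra).
  assert (0 < t/B) by (apply Rdiv_lt_0_compat; lra).
  nra.
Qed.

Lemma fact_all a1 a2 N m n : (0 < a2)%nat -> Nat.gcd a1 a2 = 1%nat ->
  in_Z a1 a2 (N * a2) m n ->
  exists k, (k * a1 <= N)%nat /\ m = (k * a2)%nat /\ n = (N - k * a1)%nat.
Proof.
  unfold in_Z. intros Ha2 Hg E.
  assert (Hd : Nat.divide a2 (a1 * m)).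
  { exists (N - n)%nat.
    assert (n * a2 <= N * a2)%nat by lia.
    assert (n <= N)%nat by nia. nia. }
  apply Nat.gauss in Hd.
  2: { rewrite Nat.gcd_comm; auto. }
  destruct Hd as [k ->]. exists k.
  assert ((k * a1 + n) * a2 = N * a2)%nat by lia.
  apply Nat.mul_cancel_r in H; [|lia]. lia.
Qed.

Lemma len_fact a1 a2 t N k : 0 < t -> (0 < a1)%nat -> (0 < a2)%nat -> (0 < N)%nat ->
  (k * a1 <= N)%nat ->
  tnorm t (INR (k * a2)) (INR (N - k * a1)) =
  INR N * INR a2 * mu a1 a2 t (1 - INR a1 * INR k / INR N).
Proof.
  intros Ht H1 H2 HN Hk.
  apply lt_0_INR in H1, H2, HN.
  assert (Hk' : INR k * INR a1 <= INR N) by (rewrite <- mult_INR; apply le_INR; auto).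
  unfold mu. rewrite <- tnorm_hom; auto.
  - f_equal.
    + rewrite mult_INR. field. lra.
    + rewrite minus_INR, mult_INR by auto. field. lra.
  - nra.
  - replace ((1 - (1 - INR a1 * INR k / INR N)) / INR a1) with (INR k / INR N) by (field; lra).
    apply Rdiv_le_0_compat; [apply pos_INR|lra].
  - apply Rdiv_le_0_compat; [|lra].
    apply Rmult_le_reg_r with (INR N); [lra|].
    field_simplify; lra.
Qed.

Lemma rpow_1div_pos t : 1 < t -> 0 < 1/t.
Proof. intros; apply Rdiv_lt_0_compat; lra. Qed.

Lemma hh_ge0 A B t r : 0 <= hh A B t r.
Proof. unfold hh. pose proof (rpow_ge0 ((1-r)/A) t); pose proof (rpow_ge0 (r/B) t); lra. Qed.

Section Gap.
Variables (a1 a2 : nat) (t r0 : R).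
Hypothesis Ha1 : (1 < a1)%nat.
Hypothesis Ha2 : (a1 < a2)%nat.
Hypothesis Hg : Nat.gcd a1 a2 = 1%nat.
Hypothesis Ht : 1 < t.
Hypothesis Hmu : mu a1 a2 t r0 = 1 / INR a2.
Hypothesis Hr0 : 0 < r0 < 1.

Let A := INR a1.
Let B := INR a2.
Let HA : 1 < A.
Proof. unfold A. apply lt_1_INR. auto. Qed.
Let HB : 1 < B.
Proof. unfold B. apply lt_1_INR. lia. Qed.

Lemma mu1 : mu a1 a2 t 1 = 1 / INR a2.
Proof.
  unfold mu, tnorm. replace ((1-1)/INR a1) with 0 by (field; fold A; lra).
  rewrite rpow_0, Rplus_0_l. apply rpow_inv; [lra|].
  fold B. apply Rlt_le, Rdiv_lt_0_compat; lra.
Qed.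

Lemma hh_eq : hh A B t r0 = hh A B t 1.
Proof.
  pose proof mu1 as E1. rewrite <- Hmu in E1. rewrite !mu_hh in E1. fold A B in E1.
  pose proof (hh_ge0 A B t r0); pose proof (hh_ge0 A B t 1).
  pose proof (rpow_1div_pos t Ht).
  destruct (Rtotal_order (hh A B t r0) (hh A B t 1)) as [Hl|[He|Hl]]; auto.
  - pose proof (rpow_lt (1/t) _ _ H1 (conj H Hl)). lra.
  - pose proof (rpow_lt (1/t) _ _ H1 (conj H0 Hl)). lra.
Qed.

Lemma M1 r : r0 <= r <= 1 -> mu a1 a2 t r <= mu a1 a2 t r0.
Proof.
  intros Hr. rewrite !mu_hh. fold A B. apply rpow_le; [apply rpow_1div_pos; auto|].
  split; [apply hh_ge0|].
  apply (shape_S1 (hh A B t) (dhh A B t) r0); auto.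
  - intros; apply hh_deriv; auto; lra.
  - intros; apply hh_cont; auto; lra.
  - intros; apply dhh_inc; auto; lra.
  - apply hh_eq.
Qed.

Lemma M2 x y : 0 <= x < y -> y <= r0 -> mu a1 a2 t y < mu a1 a2 t x.
Proof.
  intros Hxy Hy. rewrite !mu_hh. fold A B. apply rpow_lt; [apply rpow_1div_pos; auto|].
  split; [apply hh_ge0|].
  apply (shape_S2 (hh A B t) (dhh A B t) r0); auto.
  - intros; apply hh_deriv; auto; lra.
  - intros; apply hh_cont; auto; lra.
  - intros; apply dhh_inc; auto; lra.
  - apply hh_eq.
Qed.

Lemma M2' x y : 0 <= x <= y -> y <= r0 -> mu a1 a2 t y <= mu a1 a2 t x.
Proof.
  intros [Hx [Hxy|Hxy]] Hy; [left; apply M2; lra| subst; lra].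
Qed.

Lemma gap N : (1 <= N)%nat -> A <= INR N * r0 ->
  let K := up (INR N * ((1 - r0) / A)) in
  in_DeltaS a1 a2 t (INR N * B * (mu a1 a2 t (1 - A * IZR K / INR N) - mu a1 a2 t r0))
  /\ 0 < INR N * B * (mu a1 a2 t (1 - A * IZR K / INR N) - mu a1 a2 t r0).
Proof.
  intros HN HNr K.
  assert (HNp : 0 < INR N) by (apply lt_0_INR; lia).
  set (s0 := (1 - r0) / A) in *.
  assert (Hs0 : 0 < s0) by (unfold s0; apply Rdiv_lt_0_compat; lra).
  destruct (archimed (INR N * s0)) as [Ku Kl]. fold K in Ku, Kl.
  assert (HK0 : (0 <= K)%Z).
  { apply le_IZR. assert (0 < INR N * s0) by nra. lra. }
  set (Kn := Z.to_nat K).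
  assert (HKn : INR Kn = IZR K) by (unfold Kn; rewrite INR_IZR_INZ, Z2Nat.id; auto).
  rewrite <- HKn in *.
  assert (HKa : (Kn * a1 <= N)%nat).
  { apply INR_le. rewrite mult_INR. fold A.
    assert (INR Kn <= INR N * s0 + 1) by lra.
    assert (INR N * s0 * A = INR N * (1 - r0)) by (unfold s0; field; lra).
    nra. }
  assert (Hlen : forall k, (k * a1 <= N)%nat ->
     tnorm t (INR (k * a2)) (INR (N - k * a1)) =
     INR N * B * mu a1 a2 t (1 - A * INR k / INR N)).
  { intros k Hk. apply len_fact; [lra|lia|lia|lia|auto]. }
  assert (Hl1 : tnorm t (INR (0 * a2)) (INR (N - 0 * a1)) = INR N * B * mu a1 a2 t r0).
  { rewrite Hlen by lia. simpl INR. replace (1 - A * 0 / INR N) with 1 by (field; lra).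
    rewrite mu1, Hmu. reflexivity. }
  assert (HrK0 : 0 <= 1 - A * INR Kn / INR N).
  { apply Rmult_le_reg_r with (INR N); auto. field_simplify; [|lra].
    apply le_INR in HKa. rewrite mult_INR in HKa. fold A in HKa. lra. }
  assert (HrK1 : 1 - A * INR Kn / INR N < r0).
  { assert (INR N * s0 * A = INR N * (1 - r0)) by (unfold s0; field; lra).
    apply Rmult_lt_reg_r with (INR N); auto. field_simplify; [|lra].
    assert (A * INR Kn > INR N * s0 * A) by nra. lra. }
  assert (HNB : 0 < INR N * B) by nra.
  split.
  - exists (N * a2)%nat. split; [exists 0%nat, N; lia|].
    exists (INR N * B * mu a1 a2 t r0), (INR N * B * mu a1 a2 t (1 - A * INR Kn / INR N)).
    split; [|split; [|split; [|split]]].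
    + exists 0%nat, N. split; [unfold in_Z; lia|]. rewrite <- Hl1. f_equal; f_equal; lia.
    + exists (Kn * a2)%nat, (N - Kn * a1)%nat. split; [unfold in_Z; nia|].
      rewrite Hlen; auto.
    + apply Rmult_lt_compat_l; auto. apply M2; lra.
    + intros l [m [n [Hz ->]]] [H1 H2].
      destruct (fact_all a1 a2 N m n ltac:(lia) Hg Hz) as [k [Hk [-> ->]]].
      rewrite Hlen in H1, H2 by auto.
      destruct (Nat.lt_ge_cases k Kn) as [Hlt|Hge].
      * assert (INR k <= INR Kn - 1).
        { assert (INR (S k) <= INR Kn) by (apply le_INR; lia). rewrite S_INR in H. lra. }

        assert (r0 <= 1 - A * INR k / INR N <= 1).
        { split.
          - assert (INR N * s0 * A = INR N * (1 - r0)) by (unfold s0; field; lra).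
            apply Rmult_le_reg_r with (INR N); auto. field_simplify; [|lra].
            assert (A * INR k <= INR N * s0 * A) by nra. lra.
          - assert (0 <= A * INR k / INR N).
            { apply Rdiv_le_0_compat; [|lra]. pose proof (pos_INR k); nra. }
            lra. }
        pose proof (M1 _ H0).
        assert (INR N * B * mu a1 a2 t (1 - A * INR k / INR N) <= INR N * B * mu a1 a2 t r0)
          by (apply Rmult_le_compat_l; lra).
        lra.
      * assert (INR Kn <= INR k) by (apply le_INR; auto).
        assert (0 <= 1 - A * INR k / INR N <= 1 - A * INR Kn / INR N).
        { split.
          - apply Rmult_le_reg_r with (INR N); auto. field_simplify; [|lra].
            apply le_INR in Hk. rewrite mult_INR in Hk. fold A in Hk. lra.
          - assert (A * INR Kn / INR N <= A * INR k / INR N).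
            { unfold Rdiv. apply Rmult_le_compat_r; [left; apply Rinv_0_lt_compat; auto|nra]. }
            lra. }
        pose proof (M2' _ _ H0 ltac:(lra)).
        assert (INR N * B * mu a1 a2 t (1 - A * INR Kn / INR N) <= INR N * B * mu a1 a2 t (1 - A * INR k / INR N))
          by (apply Rmult_le_compat_l; lra).
        lra.
    + ring.
  - apply Rmult_lt_0_compat; auto. assert (mu a1 a2 t (1 - A * INR Kn / INR N) > mu a1 a2 t r0) by (apply M2; lra). lra.
Qed.
End Gap.

Lemma pigeon M : forall f : nat -> nat, (forall n, (n <= M)%nat -> (f n < M)%nat) ->
  exists i j, (i < j <= M)%nat /\ f i = f j.
Proof.
  induction M as [|M IH]; intros f Hf.
  - specialize (Hf 0%nat ltac:(lia)). lia.
  - destruct (Classical_Prop.classic (exists n, (n <= M)%nat /\ f n = f (S M))) as [[n [Hn E]]|Hno].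
    + exists n, (S M). split; [lia|auto].
    + destruct (Nat.eq_dec (f (S M)) M) as [Hv|Hv].
      * destruct (IH f) as [i [j [Hij E]]].
        { intros n Hn. assert (f n < S M)%nat by (apply Hf; lia).
          assert (f n <> M). { intros C. apply Hno. exists n. split; auto. lia. }
          lia. }
        exists i, j. split; [lia|auto].
      * set (g := fun n => if Nat.eq_dec (f n) M then f (S M) else f n).
        destruct (IH g) as [i [j [Hij E]]].
        { intros n Hn. unfold g. destruct (Nat.eq_dec (f n) M).
          - assert (f (S M) < S M)%nat by (apply Hf; lia). lia.
          - assert (f n < S M)%nat by (apply Hf; lia). lia. }
        exists i, j. split; [lia|].
        unfold g in E. destruct (Nat.eq_dec (f i) M), (Nat.eq_dec (f j) M).
        -- congruence.
        -- exfalso. apply Hno. exists j. split; [lia|auto].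
        -- exfalso. apply Hno. exists i. split; [lia|auto].
        -- auto.
Qed.

Lemma dirichlet (al : R) (M : nat) : (1 <= M)%nat ->
  exists (q : nat) (p : Z), (1 <= q)%nat /\ Rabs (INR q * al - IZR p) < 1 / INR M.
Proof.
  intros HM.
  assert (HMr : 0 < INR M) by (apply lt_0_INR; lia).
  set (F := fun n : nat => INR n * al - (IZR (up (INR n * al)) - 1)).
  assert (HF : forall n, 0 <= F n < 1).
  { intros n. unfold F. destruct (archimed (INR n * al)). lra. }
  set (b := fun n => Z.to_nat (up (INR M * F n) - 1)).
  assert (Hb : forall n, (0 <= up (INR M * F n) - 1)%Z /\ (up (INR M * F n) - 1 < Z.of_nat M)%Z
              /\ IZR (up (INR M * F n)) - 1 <= INR M * F n < IZR (up (INR M * F n))).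
  { intros n. destruct (archimed (INR M * F n)) as [H1 H2]. specialize (HF n).
    assert (0 <= INR M * F n < INR M) by nra.
    split; [|split].
    - assert (0 < up (INR M * F n))%Z by (apply lt_IZR; simpl; lra). lia.
    - apply lt_IZR. rewrite minus_IZR, <- INR_IZR_INZ. simpl. lra.
    - lra. }
  destruct (pigeon M b) as [i [j [Hij E]]].
  { intros n _. unfold b. destruct (Hb n) as [H1 [H2 _]]. lia. }
  exists (j - i)%nat, (up (INR j * al) - up (INR i * al))%Z. split; [lia|].
  unfold b in E. destruct (Hb i) as [Hi1 [Hi2 Hi3]]. destruct (Hb j) as [Hj1 [Hj2 Hj3]].
  assert (Eu : up (INR M * F i) = up (INR M * F j)) by lia.
  rewrite Eu in Hi3.
  assert (Rabs (F j - F i) < 1 / INR M).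
  { apply Rabs_def1.
    - apply Rmult_lt_reg_l with (INR M); auto. field_simplify; lra.
    - apply Rmult_lt_reg_l with (INR M); auto. field_simplify; lra. }
  replace (INR (j - i) * al - IZR (up (INR j * al) - up (INR i * al))) with (F j - F i); auto.
  unfold F. rewrite minus_INR by lia. rewrite minus_IZR. ring.
Qed.

Lemma sweep a T e : 0 < e -> a <= T -> exists j : nat, T - e < a + INR j * e <= T.
Proof.
  intros He HaT. set (x := (T - a) / e).
  assert (Hx : 0 <= x) by (unfold x; apply Rdiv_le_0_compat; lra).
  destruct (archimed x) as [H1 H2].
  assert (Hu : (0 <= up x - 1)%Z).
  { assert (0 < up x)%Z by (apply lt_IZR; simpl; lra). lia. }
  exists (Z.to_nat (up x - 1)).
  rewrite INR_IZR_INZ, Z2Nat.id by auto. rewrite minus_IZR. simpl.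
  assert (x * e = T - a) by (unfold x; field; lra).
  split; nra.
Qed.

Lemma density (al : R) :
  (forall (q : nat) (p : Z), (1 <= q)%nat -> INR q * al <> IZR p) ->
  forall th eta (N0 : nat), 0 <= th <= 1 -> 0 < eta ->
  exists N : nat, (N0 <= N)%nat /\ Rabs (IZR (up (INR N * al)) - INR N * al - th) < eta.
Proof.
  intros Hirr th eta N0 Hth Heta.
  set (e1 := Rmin eta (1/2) / 2).
  assert (He1 : 0 < e1 /\ e1 <= eta / 2 /\ e1 <= 1/4).
  { unfold e1. pose proof (Rmin_l eta (1/2)); pose proof (Rmin_r eta (1/2)).
    assert (0 < Rmin eta (1/2)) by (apply Rmin_pos; lra). lra. }
  set (z := th * (1 - 2 * e1) + e1).
  assert (Hz : e1 <= z <= 1 - e1 /\ Rabs (z - th) <= e1).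
  { unfold z. split; [nra|]. apply Rabs_le. nra. }
  set (M := Z.to_nat (up (2 / e1))).
  destruct (archimed (2 / e1)) as [HM1 _].
  assert (HM : INR M > 2 / e1).
  { unfold M. rewrite INR_IZR_INZ, Z2Nat.id; auto.
    apply le_IZR. simpl. assert (0 < 2 / e1) by (apply Rdiv_lt_0_compat; lra). lra. }
  assert (HM0 : (1 <= M)%nat).
  { assert (0 < 2 / e1) by (apply Rdiv_lt_0_compat; lra).
    destruct M; [simpl in HM; lra| lia]. }
  destruct (dirichlet al M HM0) as [q [p [Hq Hqp]]].
  set (e := INR q * al - IZR p) in *.
  assert (HMr : 0 < INR M) by (apply lt_0_INR; lia).
  assert (Hee : Rabs e < e1 / 2).
  { assert (1 / INR M < e1 / 2).
    { assert (INR M * e1 > 2).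
      { assert (2 / e1 * e1 = 2) by (field; lra). nra. }
      apply Rmult_lt_reg_l with (2 * INR M); [lra|].
      replace (2 * INR M * (1 / INR M)) with 2 by (field; lra). lra. }
    lra. }
  assert (He0 : e <> 0).
  { unfold e. intros C. apply (Hirr q p Hq). lra. }
  set (a := INR N0 * al).
  assert (Hsw : exists (L : Z) (j : nat), Rabs ((IZR L - z) - (a + INR j * e)) < Rabs e).
  { destruct (Rlt_or_le 0 e) as [Hpos|Hneg].
    - destruct (archimed (a + z)) as [A1 A2].
      destruct (sweep a (IZR (up (a + z)) - z) e Hpos ltac:(lra)) as [j Hj].
      exists (up (a + z)), j. rewrite Rabs_pos_eq with (x := e) by lra.
      apply Rabs_def1; lra.
    - assert (Hneg' : 0 < - e) by (destruct Hneg; [lra| contradiction]).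
      destruct (archimed (a + z)) as [A1 A2].
      destruct (sweep (- a) (- (IZR (up (a + z) - 1) - z)) (- e) Hneg') as [j Hj].
      { rewrite minus_IZR. simpl. lra. }
      exists (up (a + z) - 1)%Z, j. rewrite Rabs_left with (r := e) by lra.
      apply Rabs_def1; lra. }
  destruct Hsw as [L [j Hj]].
  exists (N0 + j * q)%nat. split; [lia|].
  assert (HN : INR (N0 + j * q) * al = a + INR j * e + INR j * IZR p).
  { rewrite plus_INR, mult_INR. unfold a, e. ring. }
  assert (Hup : up (INR (N0 + j * q) * al) = (L + Z.of_nat j * p)%Z).
  { symmetry. apply tech_up; rewrite plus_IZR, mult_IZR, <- INR_IZR_INZ, HN.
    - apply Rabs_def2 in Hj. lra.
    - apply Rabs_def2 in Hj. lra. }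
  rewrite Hup, plus_IZR, mult_IZR, <- INR_IZR_INZ, HN.
  apply Rabs_def2 in Hj. destruct Hz as [Hz1 Hz2]. apply Rabs_le_between in Hz2.
  apply Rabs_def1; lra.
Qed.

Theorem proposition1 (a1 a2 : nat) (t r0 P : R) :
  (1 < a1)%nat -> (a1 < a2)%nat -> Nat.gcd a1 a2 = 1%nat ->
  1 < t ->
  is_r0 a1 a2 t r0 ->
  is_derive (mu a1 a2 t) r0 P ->
  irrational r0 ->
  forall y : R, 0 <= y <= Rabs (INR a1 * INR a2 * P) ->
  forall eps : R, 0 < eps ->
  exists d : R, in_DeltaS a1 a2 t d /\ Rabs (d - y) < eps.
Proof.
  intros Ha1 Ha2 Hg Ht [Hr01 [Hmu _]] Hder Hirr y Hy eps Heps.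
  assert (HA : 1 < INR a1) by (apply lt_1_INR; auto).
  assert (HB : 1 < INR a2) by (apply lt_1_INR; lia).
  set (A := INR a1) in *. set (B := INR a2) in *.
  assert (Hr0 : 0 < r0 < 1).
  { split.
    - destruct Hr01 as [[H|H] _]; auto. exfalso. apply Hirr. exists 0%Z, 1%Z.
      split; [lia|]. rewrite <- H. simpl. field.
    - destruct Hr01 as [_ [H|H]]; auto. exfalso. apply Hirr. exists 1%Z, 1%Z.
      split; [lia|]. rewrite H. simpl. field. }
  set (s0 := (1 - r0) / A).
  assert (Hs0irr : forall (q : nat) (p : Z), (1 <= q)%nat -> INR q * s0 <> IZR p).
  { intros q p Hq E. apply Hirr.
    exists (Z.of_nat q - Z.of_nat a1 * p)%Z, (Z.of_nat q). split; [lia|].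
    rewrite minus_IZR, mult_IZR, <- !INR_IZR_INZ. fold A.
    assert (0 < INR q) by (apply lt_0_INR; lia).
    rewrite <- E. unfold s0. field. lra. }
  set (c := - (A * B * P)).
  set (th := fun N : nat => IZR (up (INR N * s0)) - INR N * s0).
  assert (Hth : forall N, 0 < th N <= 1).
  { intros N. unfold th. destruct (archimed (INR N * s0)). lra. }
  apply is_derive_Reals in Hder.
  assert (Key : forall ep, 0 < ep -> exists N0 : nat, forall N : nat, (N0 <= N)%nat ->
            exists d, in_DeltaS a1 a2 t d /\ 0 < d /\ Rabs (d - c * th N) <= A * B * ep * th N).
  { intros ep Hep. destruct (Hder ep Hep) as [del Hdel].
    destruct (archimed (A / del)) as [U1 _].
    destruct (archimed (A / r0)) as [V1 _].
    assert (0 < A / del) by (apply Rdiv_lt_0_compat; [lra| apply cond_pos]).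
    assert (0 < A / r0) by (apply Rdiv_lt_0_compat; lra).
    exists (Z.to_nat (up (A / del)) + Z.to_nat (up (A / r0)) + 1)%nat.
    intros N HN.
    assert (HU : A / del < INR N).
    { assert (INR (Z.to_nat (up (A / del))) <= INR N) by (apply le_INR; lia).
      rewrite INR_IZR_INZ, Z2Nat.id in H1; [lra|]. apply le_IZR. simpl. lra. }
    assert (HV : A / r0 < INR N).
    { assert (INR (Z.to_nat (up (A / r0))) <= INR N) by (apply le_INR; lia).
      rewrite INR_IZR_INZ, Z2Nat.id in H1; [lra|]. apply le_IZR. simpl. lra. }
    assert (HNp : 0 < INR N) by (apply lt_0_INR; lia).
    assert (HNr : A <= INR N * r0).
    { assert (A / r0 * r0 = A) by (field; lra). nra. }
    destruct (gap a1 a2 t r0 Ha1 Ha2 Hg Ht Hmu Hr0 N ltac:(lia) HNr) as [HD Hpos].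
    fold A B s0 in HD, Hpos.
    set (h := - A * th N / INR N).
    assert (Eh : 1 - A * IZR (up (INR N * s0)) / INR N = r0 + h).
    { unfold h, th, s0. field. split; lra. }
    rewrite Eh in HD, Hpos.
    eexists. split; [exact HD|]. split; [exact Hpos|].
    destruct (Hth N) as [T1 T2].
    assert (Hh0 : h <> 0).
    { unfold h. intros C. assert (A * th N = 0).
      { apply Rmult_eq_reg_r with (/ INR N); [|apply Rinv_neq_0_compat; lra]. 
        unfold h in C. unfold Rdiv in C. lra. }
      nra. }
    assert (Hhd : Rabs h < del).
    { unfold h. rewrite Rabs_left.
      - assert (A * th N / INR N <= A / INR N).
        { unfold Rdiv. apply Rmult_le_compat_r; [left; apply Rinv_0_lt_compat; lra| nra]. }
        assert (A / INR N < del).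
        { pose proof (cond_pos del).
          apply Rmult_lt_reg_r with (INR N); auto.
          replace (A / INR N * INR N) with A by (field; lra).
          assert (A / del * del = A) by (field; lra). nra. }
        unfold Rdiv in *. lra.
      - unfold Rdiv. assert (0 < A * th N * / INR N).
        { apply Rmult_lt_0_compat; [nra| apply Rinv_0_lt_compat; lra]. } lra. }
    specialize (Hdel h Hh0 Hhd).
    set (err := (mu a1 a2 t (r0 + h) - mu a1 a2 t r0) / h - P) in *.
    assert (Emu : mu a1 a2 t (r0 + h) - mu a1 a2 t r0 = h * (P + err)).
    { unfold err. field. auto. }
    rewrite Emu.
    replace (INR N * B * (h * (P + err)) - c * th N) with (- (A * B * th N * err)).
    2: { unfold c, h. field. lra. }
    rewrite Rabs_Ropp, !Rabs_mult.
    rewrite (Rabs_pos_eq A), (Rabs_pos_eq B), (Rabs_pos_eq (th N)) by lra.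
    assert (0 < A * B) by nra.
    assert (Rabs err <= ep) by lra.
    assert (0 <= A * B * th N) by nra.
    pose proof (Rabs_pos err). nra. }
  assert (HAB : 0 < A * B) by nra.
  destruct (Rtotal_order c 0) as [Hc|[Hc|Hc]].
  -
    exfalso.
    destruct (Key (- c / (2 * (A * B)))) as [N0 HN0].
    { apply Rdiv_lt_0_compat; lra. }
    destruct (HN0 N0 (Nat.le_refl _)) as [d [_ [Hd Habs]]].
    replace (A * B * (- c / (2 * (A * B))) * th N0) with (- c / 2 * th N0) in Habs by (field; lra).
    apply Rabs_le_between in Habs as [Hab1 Hab2].
    destruct (Hth N0). nra.
  -
    assert (Hy0 : y = 0).
    { replace (A * B * P) with (- c) in Hy by (unfold c; ring). rewrite Hc, Ropp_0, Rabs_R0 in Hy. lra. }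
    destruct (Key (eps / (2 * (A * B)))) as [N0 HN0].
    { apply Rdiv_lt_0_compat; lra. }
    destruct (HN0 N0 (Nat.le_refl _)) as [d [HD [Hd Habs]]].
    exists d. split; auto. rewrite Hy0.
    replace (A * B * (eps / (2 * (A * B))) * th N0) with (eps / 2 * th N0) in Habs by (field; lra).
    rewrite Hc, Rmult_0_l in Habs. destruct (Hth N0). nra.
  -
    assert (Hyc : 0 <= y / c <= 1).
    { replace (A * B * P) with (- c) in Hy by (unfold c; ring).
      rewrite Rabs_Ropp, Rabs_pos_eq in Hy by lra.
      split; [apply Rdiv_le_0_compat; lra|].
      apply Rmult_le_reg_r with c; auto. field_simplify; lra. }
    destruct (Key (eps / (2 * (A * B)))) as [N0 HN0].
    { apply Rdiv_lt_0_compat; lra. }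
    destruct (density s0 Hs0irr (y / c) (eps / (2 * c)) N0 Hyc) as [N [HN Hdens]].
    { apply Rdiv_lt_0_compat; lra. }
    destruct (HN0 N HN) as [d [HD [Hd Habs]]].
    exists d. split; auto.
    replace (A * B * (eps / (2 * (A * B))) * th N) with (eps / 2 * th N) in Habs by (field; lra).
    assert (Habs' : Rabs (d - c * th N) <= eps / 2) by (destruct (Hth N); nra).
    fold (th N) in Hdens.
    assert (Rabs (c * th N - y) < eps / 2).
    { replace (c * th N - y) with (c * (th N - y / c)) by (field; lra).
      rewrite Rabs_mult, Rabs_pos_eq by lra.
      apply Rmult_lt_reg_l with (/ c); [apply Rinv_0_lt_compat; lra|].
      replace (/ c * (c * Rabs (th N - y / c))) with (Rabs (th N - y / c)) by (field; lra).
      replace (/ c * (eps / 2)) with (eps / (2 * c)) by (field; lra). auto. }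
    replace (d - y) with ((d - c * th N) + (c * th N - y)) by ring.
    pose proof (Rabs_triang (d - c * th N) (c * th N - y)). lra.
Qed.
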